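(* Let $E$ be a Hausdorff locally convex topological vector space, $\Omega$ a nonempty open subset of $E$, $F$ a nonempty subset of $E$ and $f:\Omega\to\mathbb{R}$ a function. Assume that $\hat{x}\in\Omega\cap F$ is an optimal solution of the problem of maximizing $f(x)$ subject to $x\in\Omega$, $x\in F$ (i.e. $f(\hat x)\ge f(x)$ for all $x\in\Omega\cap F$), that $f$ is Gateaux differentiable at $\hat{x}$, and that $F$ is weak-admissible at $\hat{x}$ and determined by a family $C$. Then either $\hat{x}\in\operatorname{int}(F)$ and therefore $d_G f(\hat{x})=0$, or, if $\hat{x}\in F\setminus\operatorname{int}(F)$, we have $0\in[d_G f(\hat{x}),\mathcal{T}_{C}(\hat{x})]$; that is, there exist $(\lambda^*,\beta^* )\in\mathbb{R}^+\times\mathbb{R}^+$ and $x^*\in\mathcal{T}_{C}(\hat{x})$ such that (i) $(\lambda^*,\beta^* )\neq(0,0)$ and (ii) $\lambda^* d_G f(\hat{x})+\beta^* x^*=0$. If moreover $0\notin\mathcal{T}_{C}(\hat{x})$ (in particular if $E$ is a normed space and $F$ is admissible at $\hat{x}$, determined by $C$), then one can choose $\lambda^*=1$.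
   Context: $E^*$ is the topological dual of $E$, equipped with the weak-star ($w^*$) topology; $\overline{\operatorname{conv}}^{w^*}(B)$ is the $w^*$-closed convex hull of $B\subset E^*$. A map $g$ from $E$ (or an open subset) into a normed space $Y$ is Gateaux differentiable at $x$ if there is a continuous linear map $d_Gg(x):E\to Y$ with $\lim_{t\searrow 0}\|(g(x+tv)-g(x)-t\,d_Gg(x)(v))/t\|=0$ for every $v\in E$. For a family $C$ of functions $\phi:E\to\mathbb{R}$, $[C]^\times:=\{x\in E:\phi(x)\ge 0\ \forall\phi\in C\}$. $C$ is equi-Gateaux differentiable at $x$ if each $\phi\in C$ is Gateaux differentiable at $x$ and for every $v\in E$, $\lim_{t\searrow0}\sup_{\phi\in C}|(\phi(x+tv)-\phi(x)-t\langle d_G\phi(x),v\rangle)/t|=0$. $C$ is equi-lower semicontinuous at $x$ if for every $\varepsilon>0$ there is an open neighbourhood $O$ of $x$ with $\phi(y)-\phi(x)>-\varepsilon$ for all $y\in O$ and all $\phi\in C$. If $E$ is normed, $C$ is $r$-equi-Lipschitz at $x$ ($r\ge0$) if there is a ball centered at $x$ on which every $\phi\in C$ is $r$-Lipschitz. A set $F\subset E$ is weak-admissible at $\hat x\in F$, determined by $C$, if $C$ is a nonempty family of functions $E\to\mathbb{R}$ with: (a) $F=[C]^\times$; (b) $C$ is equi-Gateaux differentiable at $\hat x$; (c) $\{\phi\in C:\phi(\hat x)\ne0\}$ is empty or equi-lower semicontinuous at $\hat x$; (d) $\overline{\operatorname{conv}}^{w^*}\{d_G\phi(\hat x):\phi\in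 C\}$ is $w^*$-compact in $E^*$. If $E$ is normed, $F$ is admissible at $\hat x\in F$, determined by $C$, if $C$ is a nonempty family of functions $E\to\mathbb{R}$ with: (a) $F=[C]^\times$; (b) $C$ is equi-Gateaux differentiable and $r$-equi-Lipschitz at $\hat x$ for some $r\ge0$; (c) $0\notin\overline{\operatorname{conv}}^{w^*}\{d_G\phi(\hat x):\phi\in C\}$. $\mathcal{T}_C(\hat x):=\bigcap_{n\ge1}\overline{\operatorname{conv}}^{w^*}\{d_G\phi(\hat x):\phi\in C,\ \phi(\hat x)\in[0,1/n]\}\subset E^*$. For a point $w$ and a set $K$, $[w,K]:=\{\lambda w+(1-\lambda)x:\lambda\in[0,1],x\in K\}$. *)

(* Defs.v *)
From HB Require Import structures.
From mathcomp Require Import all_boot all_order all_algebra.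
From mathcomp Require Import all_classical all_reals all_analysis.
Set Implicit Arguments. Unset Strict Implicit. Unset Printing Implicit Defensive.
Import Order.TTheory GRing.Theory Num.Theory.
Import numFieldNormedType.Exports.
Local Open Scope classical_set_scope.
Local Open Scope ring_scope.

Section Defs.
Context {R : realType} {E : tvsType R}.

Definition is_dual (l : E -> R) : Prop :=
  (forall (a : R) (u v : E), l (a *: u + v) = a * l u + l v) /\ continuous l.

Definition gateaux_at (g : E -> R) (x : E) (L : E -> R) : Prop :=
  is_dual L /\
  forall v : E, (fun t : R => (g (x + t *: v) - g x - t * L v) / t) @ 0^'+ --> 0.

Definition gateaux_differentiable (g : E -> R) (x : E) : Prop :=
  exists L, gateaux_at g x L.

Definition nonneg_set (C : set (E -> R)) : set E :=
  [set x | forall phi, C phi -> 0 <= phi x].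

Definition equi_gateaux (C : set (E -> R)) (x : E) : Prop :=
  (forall phi, C phi -> gateaux_differentiable phi x) /\
  forall v : E, forall eps : R, 0 < eps -> exists2 delta : R, 0 < delta &
    forall t : R, 0 < t < delta -> forall phi L, C phi -> gateaux_at phi x L ->
      `|(phi (x + t *: v) - phi x - t * L v) / t| <= eps.

Definition equi_lsc (C : set (E -> R)) (x : E) : Prop :=
  forall eps : R, 0 < eps -> exists O : set E,
    [/\ open O, O x & forall y phi, O y -> C phi -> phi y - phi x > - eps].

Definition convex_fset (S : set (E -> R)) : Prop :=
  forall f g (t : R), S f -> S g -> 0 <= t <= 1 ->
    S (fun v => t * f v + (1 - t) * g v).

(* The weak-star closed convex hull of B (B a set of elements of E^* ):
   the weak-star topology on E^* is the topology induced by the pointwise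
   (product) topology {ptws E -> R}; the w*-closed convex hull of B in E^*
   is the set of elements of E^* lying in every pointwise-closed convex set
   of functions containing B. *)
Definition wstar_clconv (B : set (E -> R)) : set (E -> R) :=
  [set l | is_dual l /\
     forall S : set (E -> R), B `<=` S -> convex_fset S ->
       @closed {ptws E -> R} S -> S l].

Definition wstar_compact (K : set (E -> R)) : Prop :=
  K `<=` is_dual /\ @compact {ptws E -> R} K.

Definition grads (C : set (E -> R)) (x : E) : set (E -> R) :=
  [set L | exists2 phi, C phi & gateaux_at phi x L].

Definition weak_admissible (F : set E) (xh : E) (C : set (E -> R)) : Prop :=
  [/\ C !=set0,
      F = nonneg_set C,
      equi_gateaux C xh,
      (let C' := [set phi | C phi /\ phi xh != 0] in C' = set0 \/ equi_lsc C' xh)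
    & wstar_compact (wstar_clconv (grads C xh))].

Definition tangent_dual (C : set (E -> R)) (xh : E) : set (E -> R) :=
  \bigcap_(n in [set n : nat | (1 <= n)%N])
    wstar_clconv [set L | exists2 phi, C phi /\ 0 <= phi xh <= n%:R^-1
                                     & gateaux_at phi xh L].

End Defs.

(* Main.v *)
Require Import Defs.
From HB Require Import structures.
From mathcomp Require Import all_boot all_order all_algebra.
From mathcomp Require Import all_classical all_reals all_analysis.
Import Order.TTheory GRing.Theory Num.Theory.
Import numFieldNormedType.Exports.
From mathcomp Require Import ring lra.
Local Open Scope classical_set_scope.
Local Open Scope ring_scope.

Section Aux.
Context {R : realType} {E : tvsType R}.
Local Notation PT := {ptws E -> R}.

Lemma ptws_eval_cont (v : E) : continuous (fun l : PT => l v).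
Proof. exact: (@proj_continuous E (fun _ => R) v). Qed.

Lemma closed_evalle (v : E) (c : R) : @closed PT [set l : PT | l v <= c].
Proof.
apply: (@preimage_closed PT R (fun l : PT => l v) [set x | x <= c]).
  by move=> ? _; exact: ptws_eval_cont.
exact: closed_le.
Qed.

Lemma closed_evalge (v : E) (c : R) : @closed PT [set l : PT | c <= l v].
Proof.
apply: (@preimage_closed PT R (fun l : PT => l v) [set x | c <= x]).
  by move=> ? _; exact: ptws_eval_cont.
exact: closed_ge.
Qed.

Definition cch (B : set (E -> R)) : set PT :=
  [set l | forall S : set (E -> R), B `<=` S -> convex_fset S ->
     @closed PT S -> S l].

Lemma cch_closed B : @closed PT (cch B).
Proof.
move=> l cl S BS cS clS; apply: (clS).
by apply: (closureS _) cl => l' H; exact: H S BS cS clS.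
Qed.

Lemma fip_dec (T : topologicalType) (K : set T) (S : nat -> set T) :
  compact K -> (forall n, S n `<=` K) -> (forall n, S n.+1 `<=` S n) ->
  (forall n, S n !=set0) ->
  exists p, K p /\ forall n, closure (S n) p.
Proof.
move=> cK SK Sdec Sne.
have Sdec' : forall n m, (n <= m)%N -> S m `<=` S n.
  move=> n m /subnK <-; elim: (m - n)%N => [|k IH] //=.
  by rewrite addSn; exact: subset_trans (Sdec _) IH.
have FF : ProperFilter (filter_from setT S).
  apply: filter_from_proper; last by move=> i _; exact: Sne.
  apply: filter_fromT_filter; first by exists 0%N.
  move=> i j; exists (maxn i j) => x Sx; split.
    by apply: (Sdec' _ _ _ x Sx); exact: leq_maxl.
  by apply: (Sdec' _ _ _ x Sx); exact: leq_maxr.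
have [|p [Kp clp]] := cK _ FF.
  by exists 0%N => //; exact: SK.
exists p; split => // n B nB.
by apply: (clp (S n) B) => //; exists n.
Qed.

Lemma near_line (U : set E) (x v : E) : nbhs x U ->
  \forall t \near (0:R)^'+, U (x + t *: v).
Proof.
move=> Ux.
have hs : (fun t : R^o => t *: v) @ (0:R^o) --> (0:R^o) *: v.
  apply: (@continuous_comp R^o (R^o * E)%type E (fun t : R^o => (t, v))
            (fun z : R^o * E => z.1 *: z.2) 0).
    rewrite /prop_for /continuous_at /=.
    have h1 : (fun t : R^o => t) @ (0:R^o) --> (0:R^o) by exact: cvg_id.
    have h2 : (fun t : R^o => v) @ (0:R^o) --> v by exact: cvg_cst.
    exact: (cvg_pair h1 h2).
  exact: scale_continuous.
have ha : (fun t : R^o => x + t *: v) @ (0:R^o) --> x + (0:R^o) *: v.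
  apply: (@continuous_comp R^o (E * E)%type E (fun t : R^o => (x, t *: v))
            (fun z : E * E => z.1 + z.2) 0).
    rewrite /prop_for /continuous_at /=.
    have h2 : (fun t : R^o => x) @ (0:R^o) --> x by exact: cvg_cst.
    exact: (cvg_pair h2 hs).
  exact: add_continuous.
rewrite scale0r addr0 in ha.
have hw : (fun t : R => x + t *: v) @ (0:R)^'+ --> x.
  exact: cvg_within_filter ha.
exact: hw.
Qed.

End Aux.

Section Aux2.
Context {R : realType} {E : tvsType R}.
Local Notation PT := {ptws E -> R}.

Definition lin (l : E -> R) := forall a u v, l (a *: u + v) = a * l u + l v.

Lemma lin0 l : lin l -> l 0 = 0.
Proof. by move=> H; have := H 1 0 0; rewrite scale1r addr0 mul1r; lra. Qed.

Lemma linZ l a u : lin l -> l (a *: u) = a * l u.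
Proof. by move=> H; have := H a u 0; rewrite addr0 lin0 // addr0. Qed.

Lemma linD l u v : lin l -> l (u + v) = l u + l v.
Proof. by move=> H; have := H 1 u v; rewrite scale1r mul1r. Qed.

Lemma linN l v : lin l -> l (- v) = - l v.
Proof. by move=> H; rewrite -scaleN1r linZ // mulN1r. Qed.

Lemma gateaux_nonpos (f : E -> R) (xh v : E) (Df : E -> R) (P : set E) :
  gateaux_at f xh Df -> (forall y, P y -> f y <= f xh) ->
  (\forall t \near (0:R)^'+, P (xh + t *: v)) -> Df v <= 0.
Proof.
move=> [_ Hc] Pf HP; rewrite leNgt; apply/negP => Dv.
have hn := cvgr0_norm_lt _ (Hc v) (Df v / 2) (ltac:(by rewrite divr_gt0)).
have H : \forall t \near (0:R)^'+, [/\ 0 < t, P (xh + t *: v) &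
    `|(f (xh + t *: v) - f xh - t * Df v) / t| < Df v / 2].
  near=> t; split.
  - by near: t; exact: nbhs_right_gt.
  - by near: t.
  - by near: t; exact: hn.
have [t [t0 Pt Ht]] := filter_ex H.
have fle := Pf _ Pt.
have h1 : (f (xh + t *: v) - f xh - t * Df v) / t <= - Df v.
  rewrite ler_pdivrMr //; nra.
have h2 := ler_norm (- ((f (xh + t *: v) - f xh - t * Df v) / t)).
rewrite normrN in h2; lra.
Unshelve. all: by end_near.
Qed.

Lemma df_zero_interior (Omega F : set E) (f : E -> R) (xh : E) (Df : E -> R) :
  open Omega -> Omega xh -> (interior F) xh ->
  (forall x, Omega x -> F x -> f x <= f xh) ->
  gateaux_at f xh Df -> forall v, Df v = 0.
Proof.
move=> oO Ox iF opt gD.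
have nb : nbhs xh (Omega `&` F).
  apply: filterI => //; exact: open_nbhs_nbhs.
have key : forall v, Df v <= 0.
  move=> v; apply: (@gateaux_nonpos f xh v Df (Omega `&` F) gD).
    by move=> y [Oy Fy]; exact: opt.
  exact: near_line.
move=> v; have := key v; have := key (- v).
case: gD => [[lD _] _]; rewrite (linN _ _ lD); lra.
Qed.

Definition Bn (C : set (E -> R)) (xh : E) (n : nat) : set (E -> R) :=
  [set L | exists2 phi, C phi /\ 0 <= phi xh <= n%:R^-1 & gateaux_at phi xh L].

Lemma T_point (C : set (E -> R)) (xh : E) (A : nat -> set (E -> R)) :
  wstar_compact (wstar_clconv (grads C xh)) ->
  (forall n, A n `<=` Bn C xh n.+1) -> (forall n, A n.+1 `<=` A n) ->
  (forall n, A n !=set0) ->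
  exists l, tangent_dual C xh l /\ forall n, wstar_clconv (A n) l.
Proof.
move=> [Kd cK] AB Adec Ane.
have AK : forall n, A n `<=` wstar_clconv (grads C xh).
  move=> n L /AB [phi [Cphi _] gL]; split; first by case: gL.
  by move=> S gS _ _; apply: gS; exists phi.
have [p [Kp clp]] := @fip_dec PT _ _ cK AK Adec Ane.
have pA : forall n, wstar_clconv (A n) p.
  move=> n; split; first exact: Kd.
  move=> S AS cS clS; apply: (clS); exact: (@closureS PT _ _ AS _ (clp n)).
exists p; split => // m /= m1.
rewrite -(prednK m1).
case: (pA m.-1) => dp cp; split => // S BS cS clS; apply: cp => //.
exact: subset_trans (AB _) BS.
Qed.

End Aux2.

Section Aux3.
Context {R : realType} {E : tvsType R}.
Local Notation PT := {ptws E -> R}.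

Lemma le0_of_inv (x : R) : (forall n : nat, x <= n.+1%:R^-1) -> x <= 0.
Proof.
move=> H; rewrite leNgt; apply/negP => x0.
have [k hk] := ltr_add_invr x0; rewrite add0r in hk.
by have := H k; rewrite leNgt hk.
Qed.

Lemma divle (a b c d : R) : 0 < b -> 0 < d -> a * d <= c * b -> a / b <= c / d.
Proof. by move=> b0 d0 h; rewrite ler_pdivrMr // mulrAC ler_pdivlMr. Qed.

Lemma convex_half (v : E) (c : R) : convex_fset [set l : E -> R | l v <= c].
Proof. move=> f g t /= fv gv /andP [t0 t1]; nra. Qed.

Lemma convexI (A B : set (E -> R)) : convex_fset A -> convex_fset B -> convex_fset (A `&` B).
Proof. by move=> cA cB f g t [Af Bf] [Ag Bg] t01; split; [apply: cA|apply: cB]. Qed.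

Lemma margin2 (K' : set PT) (v1 v2 : E) : compact K' ->
  (forall l, K' l -> 0 < l v1 \/ 0 < l v2) ->
  exists2 m : R, 0 < m & forall l, K' l -> m <= l v1 \/ m <= l v2.
Proof.
move=> cK H; apply: contrapT => Hn.
have Hn' : forall n : nat, exists l, K' l /\ l v1 <= n.+1%:R^-1 /\ l v2 <= n.+1%:R^-1.
  move=> n; apply: contrapT => Hl; apply: Hn; exists n.+1%:R^-1 => // l Kl.
  have [h1|h1] := leP (n.+1%:R^-1) (l v1); first by left.
  have [h2|h2] := leP (n.+1%:R^-1) (l v2); first by right.
  by exfalso; apply: Hl; exists l; split => //; split; apply: ltW.
pose S n := K' `&` ([set l : PT | l v1 <= n.+1%:R^-1] `&` [set l : PT | l v2 <= n.+1%:R^-1]).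
have Sdec : forall n, S n.+1 `<=` S n.
  move=> n l [Kl [h1 h2]]; have hn : n.+2%:R^-1 <= n.+1%:R^-1 :> R.
    by rewrite lef_pV2 ?posrE // ler_nat.
  split => //; split; apply: le_trans hn; [exact: h1|exact: h2].
have Sne : forall n, S n !=set0.
  by move=> n; have [l [Kl [h1 h2]]] := Hn' n; exists l.
have [p [Kp clp]] := @fip_dec PT K' S cK (fun n l h => h.1) Sdec Sne.
have p1 : p v1 <= 0.
  apply: le0_of_inv => n; have := clp n.
  have : closure (S n) `<=` closure [set l : PT | l v1 <= n.+1%:R^-1].
    by apply: closureS => l [_ [h _]].
  move=> sub /sub; exact: closed_evalle.
have p2 : p v2 <= 0.
  apply: le0_of_inv => n; have := clp n.
  have : closure (S n) `<=` closure [set l : PT | l v2 <= n.+1%:R^-1].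
    by apply: closureS => l [_ [_ h]].
  move=> sub /sub; exact: closed_evalle.
by case: (H p Kp); lra.
Qed.

End Aux3.

Section Aux4.
Context {R : realType} {E : tvsType R}.
Local Notation PT := {ptws E -> R}.

Lemma two_sep (K' : set PT) (v1 v2 : E) : compact K' -> convex_fset K' ->
  (forall l, K' l -> 0 < l v1 \/ 0 < l v2) ->
  exists a : R, 0 <= a <= 1 /\ forall l, K' l -> 0 < a * l v1 + (1 - a) * l v2.
Proof.
move=> cK cvK H.
have [m m0 Hm] := margin2 _ _ _ cK H.
pose x (l : E -> R) := l v1 - m / 2.
pose y (l : E -> R) := l v2 - m / 2.
have xpos : forall l, K' l -> y l < 0 -> m / 2 <= x l.
  move=> l Kl; rewrite /x /y => hy; case: (Hm l Kl); lra.
have ypos : forall l, K' l -> x l < 0 -> m / 2 <= y l.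
  move=> l Kl; rewrite /x /y => hx; case: (Hm l Kl); lra.
have key : forall l l', K' l -> K' l' -> y l < 0 -> x l' < 0 ->
    y l * x l' <= x l * y l'.
  move=> l l' Kl Kl' yl xl'; rewrite leNgt; apply/negP => hlt.
  have x1 := xpos l Kl yl; have y2 := ypos l' Kl' xl'.
  pose d := x l - x l'.
  have d0 : 0 < d by rewrite /d; lra.
  pose t := - x l' / d.
  have td : t * d = - x l' by rewrite /t divfK // gt_eqF.
  have t0 : 0 <= t by rewrite /t divr_ge0 //; lra.
  have t1 : t <= 1 by rewrite /t ler_pdivrMr // mul1r /d; lra.
  have Kz := cvK l l' t Kl Kl' (ltac:(by rewrite t0 t1)).
  have z1 : t * l v1 + (1 - t) * l' v1 = m / 2.
    move: td; rewrite /d /x => td; lra.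
  have z2 : (t * l v2 + (1 - t) * l' v2 - m / 2) * d = x l * y l' - y l * x l'.
    move: td; rewrite /d /x /y => td; nra.
  have z2' : t * l v2 + (1 - t) * l' v2 - m / 2 < 0.
    have : (t * l v2 + (1 - t) * l' v2 - m / 2) * d < 0 by rewrite z2; lra.
    by rewrite pmulr_llt0.
  by case: (Hm _ Kz) => /=; lra.
pose S0 := [set a : R | a = 0 \/ exists l, [/\ K' l, y l < 0 & a = - y l / (x l - y l)]].
have S0ne : S0 !=set0 by exists 0; left.
have S0ub : ubound S0 1.
  move=> a [->|[l [Kl yl ->]]]; first by [].
  have := xpos l Kl yl => hx.
  by rewrite ler_pdivrMr ?mul1r; lra.
have hs : has_sup S0 by split => //; exists 1.
set a := sup S0.
have a0 : 0 <= a by apply: sup_upper_bound => //; left.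
have a1 : a <= 1 by apply: ge_sup.
have ca : forall l, K' l -> y l < 0 -> - y l <= a * (x l - y l).
  move=> l Kl yl; have hx := xpos l Kl yl.
  rewrite -ler_pdivrMr; last lra.
  by apply: sup_upper_bound => //; right; exists l.
have ad : forall l', K' l' -> x l' < 0 -> a * (y l' - x l') <= y l'.
  move=> l' Kl' xl'; have hy := ypos l' Kl' xl'.
  rewrite -ler_pdivlMr; last lra.
  apply: ge_sup => // b [->|[l [Kl yl ->]]].
    by rewrite divr_ge0 //; lra.
  have hx := xpos l Kl yl.
  apply: divle; [lra|lra|].
  have := key l l' Kl Kl' yl xl'; nra.
exists a; split; first by rewrite a0 a1.
move=> l Kl.
have e : a * l v1 + (1 - a) * l v2 = a * x l + (1 - a) * y l + m / 2.
  by rewrite /x /y; ring.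
rewrite e.
have [yl|yl] := ltP (y l) 0.
  by have := ca l Kl yl; nra.
have [xl|xl] := ltP (x l) 0.
  by have := ad l Kl xl; nra.
nra.
Qed.

End Aux4.

Lemma my_cover (T : topologicalType) (I : eqType) (K : set T) (D : set I)
    (f : I -> set T) :
  compact K -> (forall i, D i -> open (f i)) ->
  (forall x, K x -> exists2 i, D i & f i x) ->
  exists s : seq I, (forall i, i \in s -> D i) /\
    (forall x, K x -> exists2 i, i \in s & f i x).
Proof.
move=> cK fo cov; apply: contrapT => Hn.
pose B (s : seq I) := [set x | K x /\ forall i, i \in s -> ~ f i x].
have FF : ProperFilter (filter_from [set s : seq I | forall i : I, i \in s -> D i] B).
  apply: filter_from_proper.
    apply: filter_from_filter; first by exists [::].
    move=> s1 s2 D1 D2; exists (s1 ++ s2).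
      by move=> i; rewrite mem_cat => /orP [] ?; [exact: D1 | exact: D2].
    move=> x [Kx H]; split; split => // i ii; apply: H; rewrite mem_cat ii ?orbT //.
  move=> s Ds; apply: contrapT => Hne; apply: Hn; exists s; split => // x Kx.
  apply: contrapT => Hx; apply: Hne; exists x; split => // i ii fx.
  by apply: Hx; exists i.
have [|p [Kp clp]] := cK _ FF.
  by exists [::] => // x [].
have [i Di fip] := cov p Kp.
have : (B [:: i]) `&` (f i) !=set0.
  apply: clp.
  - by apply: in_filter_from => j; rewrite mem_seq1 => /eqP ->.
  - by apply: open_nbhs_nbhs; split; [exact: fo | exact: fip].
move=> [x [[_ H] fx]]; exact: H i (mem_head _ _) fx.
Qed.

Section Aux5.
Context {R : realType} {E : tvsType R}.
Local Notation PT := {ptws E -> R}.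

Lemma open_evalgt (v : E) : @open PT [set l : PT | 0 < l v].
Proof.
apply: (@open_comp PT R (fun l : PT => l v) [set x | 0 < x]).
  by move=> ? _; exact: ptws_eval_cont.
exact: open_gt.
Qed.

Lemma sep_list (Df : E -> R) (w0 : E) : lin Df -> 0 < Df w0 ->
  forall s : seq E, forall K' : set PT, compact K' -> convex_fset K' ->
  (forall l, K' l -> lin l) -> (forall v, v \in s -> 0 < Df v) ->
  (forall l, K' l -> exists2 v, v \in s & 0 < l v) ->
  exists w, 0 < Df w /\ forall l, K' l -> 0 < l w.
Proof.
move=> lD Dw0; elim=> [|v s IH] K' cK cvK linK Dfs cov.
  by exists w0; split => // l /cov [u]; rewrite in_nil.
have [w' [Dw' Hw']] : exists w', 0 < Df w' /\
    forall l, (K' `&` [set l : PT | l v <= 0]) l -> 0 < l w'.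
  apply: (IH (K' `&` [set l : PT | l v <= 0])).
  - by apply: compact_closedI => //; exact: closed_evalle.
  - exact: convexI cvK (convex_half v 0).
  - by move=> l [Kl _]; exact: linK.
  - by move=> u us; apply: Dfs; rewrite in_cons us orbT.
  - move=> l [Kl lv]; have [u] := cov l Kl; rewrite in_cons => /orP [/eqP ->|us] lu.
      by exfalso; rewrite /= in lv; lra.
    by exists u.
have Dv : 0 < Df v by apply: Dfs; rewrite in_cons eqxx.
have [a [/andP [a0 a1] Ha]] : exists a : R, 0 <= a <= 1 /\
    forall l, K' l -> 0 < a * l v + (1 - a) * l w'.
  apply: two_sep => // l Kl.
  by case: (leP (l v) 0) => h; [right; apply: Hw' | left].
exists (a *: v + (1 - a) *: w'); split.
  by rewrite (linD _ _ _ lD) !(linZ _ _ _ lD); nra.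
move=> l Kl; rewrite (linD _ _ _ (linK l Kl)) !(linZ _ _ _ (linK l Kl)).
exact: Ha.
Qed.

Lemma T_compact (C : set (E -> R)) (xh : E) :
  wstar_compact (wstar_clconv (grads C xh)) -> @compact PT (tangent_dual C xh).
Proof.
move=> [Kd cK].
have -> : tangent_dual C xh = wstar_clconv (grads C xh) `&`
    \bigcap_(n in [set n : nat | (1 <= n)%N]) cch (Bn C xh n).
  apply/seteqP; split => l.
  - move=> Tl; split.
      have [dl cl] := Tl 1%N (isT : (1 <= 1)%N).
      split => // S gS cS clS; apply: cl => //; apply: subset_trans gS.
      by move=> L [phi [Cphi _] gL]; exists phi.
    by move=> n n1; exact: (Tl n n1).2.
  - by move=> [[dl _] Xl] n n1; split => //; exact: Xl n n1.
apply: compact_closedI => //; apply: closed_bigI => n _; exact: cch_closed.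
Qed.

Lemma dual_convex (f g : E -> R) (t : R) : is_dual f -> is_dual g ->
  is_dual (fun v => t * f v + (1 - t) * g v).
Proof.
move=> [lf cf] [lg cg]; split.
  by move=> a u v; rewrite lf lg; ring.
move=> x; apply: (@continuousD _ _ _ (fun v => t * f v) (fun v => (1 - t) * g v) x).
  by apply: (@continuousM _ _ (fun _ => t) f x); [exact: cst_continuous | exact: cf].
by apply: (@continuousM _ _ (fun _ => 1 - t) g x); [exact: cst_continuous | exact: cg].
Qed.

Lemma T_convex (C : set (E -> R)) (xh : E) : convex_fset (tangent_dual C xh).
Proof.
move=> f g t Tf Tg t01 n n1; split.
  exact: dual_convex (Tf n n1).1 (Tg n n1).1.
move=> S BS cS clS; apply: (cS) => //; [exact: (Tf n n1).2 S BS cS clS | exact: (Tg n n1).2 S BS cS clS].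
Qed.

End Aux5.

Theorem theorem4p2 (R : realType) (E : tvsType R) (hE : hausdorff_space E)
  (Omega F : set E) (f : E -> R) (C : set (E -> R)) (xh : E) (Df : E -> R) :
  open Omega -> Omega !=set0 -> F !=set0 ->
  Omega xh -> F xh ->
  (forall x, Omega x -> F x -> f x <= f xh) ->
  gateaux_at f xh Df ->
  weak_admissible F xh C ->
  ((interior F) xh -> forall v, Df v = 0) /\
  (~ (interior F) xh ->
     (exists (lam beta : R) (xs : E -> R),
        [/\ 0 <= lam, 0 <= beta, tangent_dual C xh xs,
            (lam, beta) != (0, 0) &
            forall v, lam * Df v + beta * xs v = 0]) /\
     (~ tangent_dual C xh (fun _ => 0) ->
        exists (beta : R) (xs : E -> R),
          [/\ 0 <= beta, tangent_dual C xh xs &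
              forall v, Df v + beta * xs v = 0])).
Proof.
move=> oO _ _ Ox Fx opt gD [Cne FC eqG lsc Kc].
split; first by move=> iF; exact: (df_zero_interior Omega F f xh Df oO Ox iF opt gD).
move=> niF.
have lD : lin Df by case: gD => [[]].
have Fx' : forall phi, C phi -> 0 <= phi xh by move: Fx; rewrite FC.
have inv0 : forall n : nat, 0 < n.+1%:R^-1 :> R by move=> n; rewrite invr_gt0 ltr0Sn.
have Bne : forall n, Bn C xh n.+1 !=set0.
  move=> n; apply: contrapT => Hn.
  have big : forall phi, C phi -> n.+1%:R^-1 < phi xh.
    move=> phi Cphi; rewrite ltNge; apply/negP => hle.
    have [L gL] := eqG.1 phi Cphi.
    by apply: Hn; exists L; exists phi => //; split => //; rewrite Fx'.
  apply: niF; rewrite /interior /=.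
  case: lsc => [C0|Hlsc].
  - rewrite FC; apply: (@filterS _ _ _ setT); last exact: filterT.
    move=> y _ phi Cphi; exfalso.
    have : ([set phi | C phi /\ phi xh != 0] phi).
      by split => //; rewrite gt_eqF //; exact: lt_trans (inv0 n) (big _ Cphi).
    by rewrite C0.
  - have [U0 [oO' Ox' HO]] := Hlsc n.+1%:R^-1 (inv0 n).
    rewrite FC; apply: (@filterS _ _ _ U0); last by apply: open_nbhs_nbhs; split.
    move=> y Oy phi Cphi.
    have C'phi : C phi /\ phi xh != 0.
      by split => //; rewrite gt_eqF //; exact: lt_trans (inv0 n) (big _ Cphi).
    have := HO y phi Oy C'phi; have := big phi Cphi.
    set q := (n.+1%:R^-1 : R); lra.
have Bdec : forall n, Bn C xh n.+2 `<=` Bn C xh n.+1.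
  move=> n L [phi [Cphi /andP [h0 h1]] gL]; exists phi => //; split => //.
  rewrite h0 /=; apply: le_trans h1 _.
  by rewrite lef_pV2 ?posrE // ler_nat.
have [l0 [Tl0 _]] := T_point C xh (fun n => Bn C xh n.+1) Kc
   (fun n x h => h) Bdec Bne.
have Tlin : forall l, tangent_dual C xh l -> lin l.
  by move=> l Tl; case: (Tl 1%N isT) => [[]].
have main : exists (lam beta : R) (xs : E -> R),
   [/\ 0 <= lam, 0 <= beta, tangent_dual C xh xs, (lam, beta) != (0, 0) &
       forall v, lam * Df v + beta * xs v = 0].
  apply: contrapT => Hno.
  have [w0 Dw0] : exists w0, 0 < Df w0.
    apply: contrapT => Hw; apply: Hno; exists 1, 0, l0; split => //.
    - by rewrite xpair_eqE oner_eq0.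
    - move=> v; have h1 : Df v <= 0.
        by rewrite leNgt; apply/negP => h; apply: Hw; exists v.
      have h2 : Df (- v) <= 0.
        by rewrite leNgt; apply/negP => h; apply: Hw; exists (- v).
      rewrite (linN _ _ lD) in h2; lra.
  pose u0 := (Df w0)^-1 *: w0.
  have Du0 : Df u0 = 1 by rewrite /u0 (linZ _ _ _ lD) mulVf // gt_eqF.
  have cov : forall l, tangent_dual C xh l ->
      exists2 v, [set v | 0 < Df v] v & [set l : {ptws E -> R} | 0 < l v] l.
    move=> l Tl; apply: contrapT => Hl.
    have Hl' : forall v, 0 < Df v -> l v <= 0.
      by move=> v Dv; rewrite leNgt; apply/negP => lv; apply: Hl; exists v.
    have ll := Tlin l Tl.
    have ker : forall u, Df u = 0 -> l u = 0.
      move=> u Du; apply: contrapT => lu.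
      pose t := (1 - l u0) / l u.
      have := Hl' (u0 + t *: u).
      rewrite (linD _ _ _ ll) (linZ _ t u ll) /t divfK; last exact/eqP.
      rewrite (linD _ _ _ lD) (linZ _ _ u lD) Du Du0 mulr0 addr0.
      by move=> /(_ ltr01); lra.
    have lform : forall v, l v = Df v * l u0.
      move=> v; have : Df (v - Df v *: u0) = 0.
        by rewrite (linD _ _ _ lD) (linN _ _ lD) (linZ _ (Df v) u0 lD) Du0 mulr1 subrr.
      move=> /ker; rewrite (linD _ _ _ ll) (linN _ _ ll) (linZ _ (Df v) u0 ll); lra.
    have lu0 : l u0 <= 0 by apply: Hl'; rewrite Du0.
    apply: Hno; exists (- l u0), 1, l; split => //.
    - by rewrite oppr_ge0.
    - by rewrite xpair_eqE oner_eq0 andbF.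
    - by move=> v; rewrite (lform v); ring.
  have opn : forall v, [set v | 0 < Df v] v ->
      open [set l : {ptws E -> R} | 0 < l v].
    by move=> v _; exact: open_evalgt.
  have [s [sD scov]] := my_cover {ptws E -> R} E (tangent_dual C xh)
      [set v | 0 < Df v] (fun v => [set l : {ptws E -> R} | 0 < l v])
      (T_compact C xh Kc) opn cov.
  have [w [Dw Tw]] := sep_list Df w0 lD Dw0 s (tangent_dual C xh)
      (T_compact C xh Kc) (T_convex C xh) Tlin sD scov.
  have [n Hn] : exists n : nat, forall L, Bn C xh n.+1 L -> n.+1%:R^-1 < L w.
    apply: contrapT => Hn.
    have Ane : forall n, (Bn C xh n.+1 `&` [set L | L w <= n.+1%:R^-1]) !=set0.
      move=> n; apply: contrapT => Hne; apply: Hn; exists n => L BL.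
      by rewrite ltNge; apply/negP => Lw; apply: Hne; exists L.
    have Adec : forall n, (Bn C xh n.+2 `&` [set L | L w <= n.+2%:R^-1]) `<=`
        (Bn C xh n.+1 `&` [set L | L w <= n.+1%:R^-1]).
      move=> n L [BL Lw]; split; first exact: Bdec.
      by apply: le_trans Lw _; rewrite lef_pV2 ?posrE // ler_nat.
    have [p [Tp pA]] := T_point C xh
      (fun n => Bn C xh n.+1 `&` [set L | L w <= n.+1%:R^-1]) Kc
      (fun n L h => h.1) Adec Ane.
    have : p w <= 0.
      apply: le0_of_inv => n; case: (pA n) => _ cp.
      apply: (cp [set L | L w <= n.+1%:R^-1]).
      - by move=> L [].
      - exact: convex_half.
      - exact: closed_evalle.
    by have := Tw p Tp; lra.
  set q := (n.+1%:R^-1 : R).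
  have q0 : 0 < q by exact: inv0.
  pose e : R := q / 2.
  have e0 : 0 < e by rewrite divr_gt0.
  have [del del0 Hdel] := eqG.2 w e e0.
  have [U0 [oO' Ox' HO']] : exists U0 : set E, [/\ open U0, U0 xh &
      forall y phi, U0 y -> C phi -> q < phi xh -> 0 <= phi y].
    case: lsc => [C0|Hlsc].
    - exists setT; split; [exact: openT | by [] | move=> y phi _ Cphi hphi; exfalso].
      have : ([set phi | C phi /\ phi xh != 0] phi).
        by split => //; rewrite gt_eqF //; exact: lt_trans (inv0 n) hphi.
      by rewrite C0.
    - have [U0 [oO' Ox' HO]] := Hlsc q (inv0 n).
      exists U0; split => // y phi Oy Cphi hphi.
      have C'phi : C phi /\ phi xh != 0.
        by split => //; rewrite gt_eqF //; exact: lt_trans (inv0 n) hphi.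
      by have := HO y phi Oy C'phi; lra.
  have nearOF : \forall t \near (0:R)^'+, (Omega `&` F) (xh + t *: w).
    near=> t.
    have t0 : 0 < t by near: t; exact: nbhs_right_gt.
    have td : t < del by near: t; exact: nbhs_right_lt.
    have Ot : U0 (xh + t *: w).
      by near: t; apply: near_line; apply: open_nbhs_nbhs; split.
    split.
      by near: t; apply: near_line; apply: open_nbhs_nbhs; split.
    rewrite FC => phi Cphi.
    have [h|h] := leP (phi xh) q.
    + have [L gL] := eqG.1 phi Cphi.
      have BL : Bn C xh n.+1 L by exists phi => //; split => //; rewrite Fx' // h.
      have Lw : q < L w := Hn L BL.
      have hb := Hdel t (ltac:(by rewrite t0 td)) phi L Cphi gL.
      have hb' : - e <= (phi (xh + t *: w) - phi xh - t * L w) / t.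
        have := ler_norm (- ((phi (xh + t *: w) - phi xh - t * L w) / t)).
        rewrite normrN; lra.
      rewrite ler_pdivlMr // in hb'.
      have h0 := Fx' phi Cphi.
      have : t * e <= t * L w.
        by rewrite ler_pM2l //; rewrite /e; lra.
      lra.
    + exact: HO' _ _ Ot Cphi h.
  have := gateaux_nonpos f xh w Df (Omega `&` F) gD
    (fun y yOF => opt y yOF.1 yOF.2) nearOF.
  lra.
split; first exact: main.
move=> nT0.
have [lam [beta [xs [lam0 beta0 Txs nz Hv]]]] := main.
have lampos : 0 < lam.
  rewrite lt_neqAle lam0 andbT; apply/negP => /eqP l0'.
  have b0 : beta != 0 by move: nz; rewrite -l0' xpair_eqE eqxx.
  apply: nT0; have -> : (fun _ : E => 0 : R) = xs.
    apply: funext => v; have := Hv v; rewrite -l0' mul0r add0r => /eqP.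
    by rewrite mulf_eq0 (negbTE b0) /= => /eqP ->.
  exact: Txs.
exists (beta / lam), xs; split => //.
  by rewrite divr_ge0.
move=> v.
have -> : Df v + beta / lam * xs v = (lam * Df v + beta * xs v) / lam.
  by field; rewrite gt_eqF.
by rewrite Hv mul0r.
Unshelve. all: by end_near.
Qed.
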